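(* Let $\mathfrak l$ be a real finite-dimensional nilpotent Lie algebra with $\dim\mathfrak l'=2$ and $\mathfrak l'\subset\mathfrak z(\mathfrak l)$ which is admissible, and let $\bar{\mathfrak l}\subset\mathfrak l$ be a 3-dimensional subspace with $[\bar{\mathfrak l},\bar{\mathfrak l}]=\mathfrak l'$. Then $[L_1,L_2]=0$ for all $L_1,L_2\in\mathfrak l$ satisfying $[L_1,\bar{\mathfrak l}]=[L_2,\bar{\mathfrak l}]=0$.
   Context: For a Lie algebra $\mathfrak l$: $\mathfrak l^1=\mathfrak l$, $\mathfrak l^{k+1}=[\mathfrak l,\mathfrak l^k]$, $\mathfrak l'=\mathfrak l^2$, $\mathfrak z(\mathfrak l)$ the centre. An orthogonal $\mathfrak l$-module $(\rho,\mathfrak a)$ is a finite-dimensional real vector space with a nondegenerate symmetric bilinear form $\langle\cdot,\cdot\rangle_{\mathfrak a}$ and a representation by skew-adjoint maps. $C^p(\mathfrak l,\mathfrak a)$: alternating $p$-linear maps with Chevalley–Eilenberg differential $d$; $C^p(\mathfrak l)=C^p(\mathfrak l,\mathbb R)$; $\langle\alpha\wedge\beta\rangle$ is the wedge product followed by contraction with $\langle\cdot,\cdot\rangle_{\mathfrak a}$. $\mathcal Z^2_Q(\mathfrak l,\mathfrak a)=\{(\alpha,\gamma)\in C^2(\mathfrak l,\mathfrak a)\oplus C^3(\mathfrak l): d\alpha=0,d\gamma=\frac12\langle\alpha\wedge\alpha\rangle\}$; the group $C^1(\mathfrak l,\mathfrak a)\oplus C^2(\mathfrak l)$ with $(\tau_1,\sigma_1)*(\tau_2,\sigma_2)=(\tau_1+\tau_2,\sigma_1+\sigma_2+\frac12\langle\tau_1\wedge\tau_2\rangle)$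 acts by $(\alpha,\gamma)(\tau,\sigma)=(\alpha+d\tau,\gamma+d\sigma+\langle(\alpha+\frac12d\tau)\wedge\tau\rangle)$; $\mathcal H^2_Q(\mathfrak l,\mathfrak a)$ is the orbit set. Admissibility: for nilpotent $\mathfrak l$ and semisimple $(\rho,\mathfrak a)$, with $\mathfrak l^{m+2}=0$, $\mathfrak l_{(0)}=\mathfrak z(\mathfrak l)\cap\ker\rho$, $\mathfrak l_{(k)}=\mathfrak z(\mathfrak l)\cap\mathfrak l^{k+1}$ ($k\ge1$), and a representative with $\alpha(\mathfrak l,\mathfrak l)\subset\mathfrak a^{\mathfrak l}$, a class is admissible iff for all $0\le k\le m$: $(A_k)$ whenever $L_0\in\mathfrak l_{(k)}$ and there are $A_0\in\mathfrak a$, $Z_0\in(\mathfrak l^{k+1})^*$ with $\alpha(L,L_0)=0$ and $\gamma(L,L_0,\cdot)=-\langle A_0,\alpha(L,\cdot)\rangle_{\mathfrak a}+\langle Z_0,[L,\cdot]\rangle$ on $\mathfrak l^{k+1}$ for all $L$, then $L_0=0$; $(B_k)$ $\alpha$ applied to the kernel of the bracket map $\mathfrak l\otimes\mathfrak l^{k+1}\to\mathfrak l$ is a nondegenerate subspace of $\mathfrak a$. $\mathfrak l$ is admissible if some semisimple orthogonal module $\mathfrak a$ admits an admissible class in $\mathcal H^2_Q(\mathfrak l,\mathfrak a)$. *)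

(* Defs.v *)
(* Finite-dimensional real Lie algebras are modelled as
   'rV[R]_n equipped with a bracket; orthogonal modules as 'rV[R]_m with a
   bilinear form and an action map. *)
From HB Require Import structures.
From mathcomp Require Import all_boot all_order all_algebra.
From mathcomp Require Import reals.
Set Implicit Arguments. Unset Strict Implicit. Unset Printing Implicit Defensive.
Import Order.TTheory GRing.Theory Num.Theory.
Local Open Scope ring_scope.

Section Defs.
Variables (R : fieldType) (n m : nat).
Notation L := 'rV[R]_n.
Notation A := 'rV[R]_m.
Variable br : L -> L -> L.

Definition is_lie_bracket :=
  [/\ forall (c : R) x y z, br (c *: x + y) z = c *: br x z + br y z,
      forall (c : R) x y z, br z (c *: x + y) = c *: br z x + br z y,
      forall x, br x x = 0 &
      forall x y z, br x (br y z) + br y (br z x) + br z (br x y) = 0].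

(* [U, V] : span of all brackets [u, v], u in U, v in V (by bilinearity it is
   spanned by brackets of basis vectors) *)
Definition brspan (U V : {vspace L}) : {vspace L} :=
  <<[seq br x y | x <- (vbasis U : seq L), y <- (vbasis V : seq L)]>>%VS.

(* lower central series: lcs 1 = l, lcs (k+1) = [l, lcs k]; lcs 0 := l *)
Fixpoint lcs (k : nat) : {vspace L} :=
  if k is k'.+1 then (if k' is 0 then fullv else brspan fullv (lcs k'))
  else fullv.

Definition nilpotent := exists k, lcs k = 0%VS.
Definition central (x : L) := forall y, br x y = 0.

Definition is_orth_module (form : A -> A -> R) (act : L -> A -> A) :=
  [/\ forall (c : R) a b e, form (c *: a + b) e = c * form a e + form b e,
      forall a b, form a b = form b a &
      forall a, (forall b, form a b = 0) -> a = 0] /\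
  [/\ forall (c : R) x y v, act (c *: x + y) v = c *: act x v + act y v,
      forall (c : R) x v w, act x (c *: v + w) = c *: act x v + act x w,
      forall x y v, act (br x y) v = act x (act y v) - act y (act x v) &
      forall x v w, form (act x v) w + form v (act x w) = 0].

Definition invariant_sub (act : L -> A -> A) (U : {vspace A}) :=
  forall x v, v \in U -> act x v \in U.

Definition semisimple (act : L -> A -> A) :=
  forall U : {vspace A}, invariant_sub act U ->
    exists W : {vspace A}, [/\ invariant_sub act W, (U + W)%VS = fullv
                             & (U :&: W)%VS = 0%VS].

Definition is_C1 (tau : L -> A) :=
  forall (c : R) x y, tau (c *: x + y) = c *: tau x + tau y.
Definition is_C2 (alpha : L -> L -> A) :=
  [/\ forall (c : R) x y z, alpha (c *: x + y) z = c *: alpha x z + alpha y z,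
      forall (c : R) x y z, alpha z (c *: x + y) = c *: alpha z x + alpha z y &
      forall x, alpha x x = 0].
Definition is_C2s (sigma : L -> L -> R) :=
  [/\ forall (c : R) x y z, sigma (c *: x + y) z = c * sigma x z + sigma y z,
      forall (c : R) x y z, sigma z (c *: x + y) = c * sigma z x + sigma z y &
      forall x, sigma x x = 0].
Definition is_C3s (gamma : L -> L -> L -> R) :=
  [/\ forall (c : R) x y z w, gamma (c *: x + y) z w = c * gamma x z w + gamma y z w,
      forall (c : R) x y z w, gamma z (c *: x + y) w = c * gamma z x w + gamma z y w,
      forall (c : R) x y z w, gamma z w (c *: x + y) = c * gamma z w x + gamma z w y &
      forall x y, [/\ gamma x x y = 0, gamma x y x = 0 & gamma y x x = 0]].

Definition d1 (act : L -> A -> A) (tau : L -> A) (x y : L) : A :=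
  act x (tau y) - act y (tau x) - tau (br x y).
Definition d2 (act : L -> A -> A) (alpha : L -> L -> A) (x y z : L) : A :=
  act x (alpha y z) - act y (alpha x z) + act z (alpha x y)
  - alpha (br x y) z + alpha (br x z) y - alpha (br y z) x.
Definition d2s (sigma : L -> L -> R) (x y z : L) : R :=
  - sigma (br x y) z + sigma (br x z) y - sigma (br y z) x.
Definition d3s (gamma : L -> L -> L -> R) (x0 x1 x2 x3 : L) : R :=
  - gamma (br x0 x1) x2 x3 + gamma (br x0 x2) x1 x3 - gamma (br x0 x3) x1 x2
  - gamma (br x1 x2) x0 x3 + gamma (br x1 x3) x0 x2 - gamma (br x2 x3) x0 x1.

(* wedge products followed by contraction with the form (shuffle convention) *)
Definition half_wedge22 (form : A -> A -> R) (alpha : L -> L -> A)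
    (x0 x1 x2 x3 : L) : R :=
  form (alpha x0 x1) (alpha x2 x3) - form (alpha x0 x2) (alpha x1 x3)
  + form (alpha x0 x3) (alpha x1 x2).
Definition wedge21 (form : A -> A -> R) (beta : L -> L -> A) (tau : L -> A)
    (x y z : L) : R :=
  form (beta x y) (tau z) - form (beta x z) (tau y) + form (beta y z) (tau x).

Definition quad_cocycle form act (alpha : L -> L -> A) (gamma : L -> L -> L -> R) :=
  [/\ is_C2 alpha, is_C3s gamma,
      forall x y z, d2 act alpha x y z = 0 &
      forall x0 x1 x2 x3, d3s gamma x0 x1 x2 x3 = half_wedge22 form alpha x0 x1 x2 x3].

Definition same_class form act (alpha : L -> L -> A) (gamma : L -> L -> L -> R)
    (alpha' : L -> L -> A) (gamma' : L -> L -> L -> R) :=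
  exists (tau : L -> A) (sigma : L -> L -> R),
  [/\ is_C1 tau, is_C2s sigma,
      forall x y, alpha' x y = alpha x y + d1 act tau x y &
      forall x y z, gamma' x y z = gamma x y z + d2s sigma x y z
        + wedge21 form (fun u v => alpha u v + 2^-1 *: d1 act tau u v) tau x y z].

Definition in_lk (act : L -> A -> A) (k : nat) (L0 : L) :=
  central L0 /\ (if k is 0 then forall v, act L0 v = 0 else L0 \in lcs k.+1).

Definition lin_on (U : {vspace L}) (Z0 : L -> R) :=
  forall (c : R) x y, x \in U -> y \in U -> Z0 (c *: x + y) = c * Z0 x + Z0 y.

Definition condA form act (alpha : L -> L -> A) (gamma : L -> L -> L -> R) (k : nat) :=
  forall L0, in_lk act k L0 ->
   (exists (A0 : A) (Z0 : L -> R), lin_on (lcs k.+1) Z0 /\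
      forall Lv, alpha Lv L0 = 0 /\
        forall X, X \in lcs k.+1 ->
          gamma Lv L0 X = - form A0 (alpha Lv X) + Z0 (br Lv X)) ->
   L0 = 0.

(* alpha applied to the kernel of l (x) l^{k+1} -> l; an element of
   l (x) l^{k+1} is a finite sum of x (x) y with y in l^{k+1} *)
Definition alpha_ker (alpha : L -> L -> A) (k : nat) (v : A) :=
  exists s : seq (L * L), [/\ all (fun p => p.2 \in lcs k.+1) s,
     \sum_(p <- s) br p.1 p.2 = 0 & v = \sum_(p <- s) alpha p.1 p.2].

Definition nondeg_on (form : A -> A -> R) (P : A -> Prop) :=
  forall v, P v -> (forall w, P w -> form v w = 0) -> v = 0.

Definition condB form (alpha : L -> L -> A) (k : nat) :=
  nondeg_on form (alpha_ker alpha k).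

(* admissibility criterion (for nilpotent l, semisimple a): some representative
   with alpha(l,l) in a^l satisfies (A_k), (B_k) for all k (for k > m with
   l^{m+2} = 0 both conditions are vacuous) *)
Definition admissible_class form act (alpha : L -> L -> A) (gamma : L -> L -> L -> R) :=
  exists alpha' gamma', [/\ same_class form act alpha gamma alpha' gamma',
     forall x y z, act z (alpha' x y) = 0 &
     forall k, condA form act alpha' gamma' k /\ condB form alpha' k].

End Defs.

Definition admissible_lie (R : fieldType) (n : nat) (br : 'rV[R]_n -> 'rV[R]_n -> 'rV[R]_n) :=
  exists (m : nat) (form : 'rV[R]_m -> 'rV[R]_m -> R) (act : 'rV[R]_n -> 'rV[R]_m -> 'rV[R]_m),
   [/\ is_orth_module br form act, semisimple act &
     exists alpha gamma, quad_cocycle br form act alpha gamma /\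
                         admissible_class br form act alpha gamma].

(* Main.v *)
Require Import Defs.
From HB Require Import structures.
From mathcomp Require Import all_boot all_order all_algebra.
From mathcomp Require Import reals.
From mathcomp Require Import ring lra.
Import GRing.Theory Num.Theory.
Local Open Scope ring_scope.

Section GenLin.
Variables (K : fieldType) (V W : lmodType K).

Lemma lin0 {f : V -> W} : (forall c x y, f (c *: x + y) = c *: f x + f y) -> f 0 = 0.
Proof.
move=> Hf; have := Hf 1 0 0; rewrite scaler0 addr0 scale1r => H.
have : f 0 + f 0 = f 0 + 0 by rewrite addr0 -H.
by move/addrI.
Qed.

Lemma linD {f : V -> W} : (forall c x y, f (c *: x + y) = c *: f x + f y) ->
  forall x y, f (x + y) = f x + f y.
Proof. by move=> Hf x y; have := Hf 1 x y; rewrite !scale1r. Qed.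

Lemma linZ {f : V -> W} : (forall c x y, f (c *: x + y) = c *: f x + f y) ->
  forall c x, f (c *: x) = c *: f x.
Proof. by move=> Hf c x; have := Hf c x 0; rewrite !addr0 (lin0 Hf) addr0. Qed.

Lemma linN {f : V -> W} : (forall c x y, f (c *: x + y) = c *: f x + f y) ->
  forall x, f (- x) = - f x.
Proof. by move=> Hf x; rewrite -scaleN1r (linZ Hf) scaleN1r. Qed.

Lemma linB {f : V -> W} : (forall c x y, f (c *: x + y) = c *: f x + f y) ->
  forall x y, f (x - y) = f x - f y.
Proof. by move=> Hf x y; rewrite (linD Hf) (linN Hf). Qed.

Lemma linS {f : V -> W} : (forall c x y, f (c *: x + y) = c *: f x + f y) ->
  forall I (r : seq I) (P : pred I) F,
  f (\sum_(i <- r | P i) F i) = \sum_(i <- r | P i) f (F i).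
Proof.
move=> Hf I r P F.
apply: (big_rec2 (fun a b => f a = b)); first exact: lin0.
by move=> i a b _ <-; rewrite (linD Hf).
Qed.

Lemma slin0 {f : V -> K} : (forall c x y, f (c *: x + y) = c * f x + f y) -> f 0 = 0.
Proof.
move=> Hf; have := Hf 1 0 0; rewrite scale1r addr0 mul1r => H.
have : f 0 + f 0 = f 0 + 0 by rewrite addr0 -H.
by move/addrI.
Qed.

Lemma slinD {f : V -> K} : (forall c x y, f (c *: x + y) = c * f x + f y) ->
  forall x y, f (x + y) = f x + f y.
Proof. by move=> Hf x y; have := Hf 1 x y; rewrite scale1r mul1r. Qed.

Lemma slinZ {f : V -> K} : (forall c x y, f (c *: x + y) = c * f x + f y) ->
  forall c x, f (c *: x) = c * f x.
Proof. by move=> Hf c x; have := Hf c x 0; rewrite !addr0 (slin0 Hf) addr0. Qed.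

Lemma slinN {f : V -> K} : (forall c x y, f (c *: x + y) = c * f x + f y) ->
  forall x, f (- x) = - f x.
Proof. by move=> Hf x; rewrite -scaleN1r (slinZ Hf) mulN1r. Qed.

Lemma slinB {f : V -> K} : (forall c x y, f (c *: x + y) = c * f x + f y) ->
  forall x y, f (x - y) = f x - f y.
Proof. by move=> Hf x y; rewrite (slinD Hf) (slinN Hf). Qed.

Lemma slinS {f : V -> K} : (forall c x y, f (c *: x + y) = c * f x + f y) ->
  forall I (r : seq I) (P : pred I) F,
  f (\sum_(i <- r | P i) F i) = \sum_(i <- r | P i) f (F i).
Proof.
move=> Hf I r P F.
apply: (big_rec2 (fun a b => f a = b)); first exact: slin0.
by move=> i a b _ <-; rewrite (slinD Hf).
Qed.
End GenLin.
Arguments lin0 {K V W f}. Arguments linD {K V W f}. Arguments linZ {K V W f}.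
Arguments linN {K V W f}. Arguments linB {K V W f}. Arguments linS {K V W f}.
Arguments slin0 {K V f}. Arguments slinD {K V f}. Arguments slinZ {K V f}.
Arguments slinN {K V f}. Arguments slinB {K V f}. Arguments slinS {K V f}.

Section Main.
Variables (R : realType) (n m : nat).
Local Notation L := 'rV[R]_n.
Local Notation A := 'rV[R]_m.
Variables (br : L -> L -> L) (form : A -> A -> R) (act : L -> A -> A).
Variables (al : L -> L -> A) (ga : L -> L -> L -> R) (Lbar : {vspace L}).
Hypothesis Hbr : is_lie_bracket br.
Hypothesis Hcent : forall u, u \in lcs br 2 -> central br u.
Hypothesis HLbar : brspan br Lbar Lbar = lcs br 2.
Hypothesis Hdim : \dim (lcs br 2) = 2%N.
Hypothesis Hf1 : forall c a b e, form (c *: a + b) e = c * form a e + form b e.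
Hypothesis Hfs : forall a b, form a b = form b a.
Hypothesis Hal : is_C2 al.
Hypothesis Hcoc : forall x y z, al (br x y) z = al (br x z) y - al (br y z) x.
Hypothesis Hg1 : forall c x y z w, ga (c *: x + y) z w = c * ga x z w + ga y z w.
Hypothesis Hg3 : forall c x y z w, ga z w (c *: x + y) = c * ga z w x + ga z w y.
Hypothesis Hg12 : forall x y z, ga x y z = - ga y x z.
Hypothesis Hg13 : forall x y z, ga x y z = - ga z y x.
Hypothesis Hdg : forall a b c d, d3s br ga a b c d = half_wedge22 form al a b c d.

Lemma hb1 c x y z : br (c *: x + y) z = c *: br x z + br y z. Proof. by case: Hbr. Qed.
Lemma hb2 c x y z : br z (c *: x + y) = c *: br z x + br z y. Proof. by case: Hbr. Qed.
Lemma hb3 x : br x x = 0. Proof. by case: Hbr. Qed.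
Lemma br0l z : br 0 z = 0. Proof. exact: (@lin0 _ _ _ (fun x => br x z) (fun c x y => hb1 c x y z)). Qed.
Lemma br0r z : br z 0 = 0. Proof. exact: (@lin0 _ _ _ (fun x => br z x) (fun c x y => hb2 c x y z)). Qed.
Lemma brDl x y z : br (x + y) z = br x z + br y z.
Proof. exact: (@linD _ _ _ (fun x => br x z) (fun c x y => hb1 c x y z)). Qed.
Lemma brDr x y z : br z (x + y) = br z x + br z y.
Proof. exact: (@linD _ _ _ (fun x => br z x) (fun c x y => hb2 c x y z)). Qed.
Lemma brZl c x z : br (c *: x) z = c *: br x z.
Proof. exact: (@linZ _ _ _ (fun x => br x z) (fun c x y => hb1 c x y z)). Qed.
Lemma brZr c x z : br z (c *: x) = c *: br z x.
Proof. exact: (@linZ _ _ _ (fun x => br z x) (fun c x y => hb2 c x y z)). Qed.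
Lemma brN x y : br x y = - br y x.
Proof.
have := hb3 (x + y); rewrite brDl !brDr !hb3 add0r addr0 => /eqP.
by rewrite addr_eq0 => /eqP.
Qed.

Lemma brmem x y : br x y \in lcs br 2.
Proof.
rewrite /= {1}(coord_vbasis (memvf x)) {1}(coord_vbasis (memvf y)).
rewrite (@linS _ _ _ (fun x => br x _) (fun c x y => hb1 c x y _)).
apply: memv_suml => i _; rewrite brZl; apply: memvZ.
rewrite (@linS _ _ _ (fun x => br _ x) (fun c x y => hb2 c x y _)).
apply: memv_suml => j _; rewrite brZr; apply: memvZ.
apply: memv_span; apply: allpairs_f; apply: mem_nth; by rewrite size_tuple.
Qed.

Lemma cenl u y : u \in lcs br 2 -> br u y = 0. Proof. by move/Hcent. Qed.
Lemma cenr u y : u \in lcs br 2 -> br y u = 0.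
Proof. by move=> h; rewrite brN cenl // oppr0. Qed.

Lemma span_ext (W : lmodType R) (f : L -> W) :
  (forall c x y, f (c *: x + y) = c *: f x + f y) ->
  (forall x y, x \in Lbar -> y \in Lbar -> f (br x y) = 0) ->
  forall Y, Y \in lcs br 2 -> f Y = 0.
Proof.
move=> Hf H Y; rewrite -HLbar /brspan.
set s := [seq br x y | x <- _, y <- _] => hY.
have -> := @coord_span _ _ _ (in_tuple s) Y hY.
rewrite (linS Hf) big1 // => i _; rewrite (linZ Hf).
have : (in_tuple s)`_i \in s by apply: mem_nth; exact: ltn_ord.
case/allpairsP => [[x y] [/= hx hy ->]].
by rewrite H ?scaler0 //; apply: vbasis_mem.
Qed.

Lemma sspan_ext (f : L -> R) :
  (forall c x y, f (c *: x + y) = c * f x + f y) ->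
  (forall x y, x \in Lbar -> y \in Lbar -> f (br x y) = 0) ->
  forall Y, Y \in lcs br 2 -> f Y = 0.
Proof.
move=> Hf H Y; rewrite -HLbar /brspan.
set s := [seq br x y | x <- _, y <- _] => hY.
have -> := @coord_span _ _ _ (in_tuple s) Y hY.
rewrite (slinS Hf) big1 // => i _; rewrite (slinZ Hf).
have : (in_tuple s)`_i \in s by apply: mem_nth; exact: ltn_ord.
case/allpairsP => [[x y] [/= hx hy ->]].
by rewrite H ?mulr0 //; apply: vbasis_mem.
Qed.


Lemma al1 c x y z : al (c *: x + y) z = c *: al x z + al y z. Proof. by case: Hal. Qed.
Lemma al2 c x y z : al z (c *: x + y) = c *: al z x + al z y. Proof. by case: Hal. Qed.
Lemma al3 x : al x x = 0. Proof. by case: Hal. Qed.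
Lemma al0l z : al 0 z = 0. Proof. exact: (@lin0 _ _ _ (fun x => al x z) (fun c x y => al1 c x y z)). Qed.
Lemma alDl x y z : al (x + y) z = al x z + al y z.
Proof. exact: (@linD _ _ _ (fun x => al x z) (fun c x y => al1 c x y z)). Qed.
Lemma alDr x y z : al z (x + y) = al z x + al z y.
Proof. exact: (@linD _ _ _ (fun x => al z x) (fun c x y => al2 c x y z)). Qed.
Lemma alN x y : al x y = - al y x.
Proof.
have := al3 (x + y); rewrite alDl !alDr !al3 add0r addr0 => /eqP.
by rewrite addr_eq0 => /eqP.
Qed.
Lemma f0l e : form 0 e = 0. Proof. exact: (@slin0 _ _ (fun a => form a e) (fun c a b => Hf1 c a b e)). Qed.
Lemma f0r e : form e 0 = 0. Proof. by rewrite Hfs f0l. Qed.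
Lemma fNl a e : form (- a) e = - form a e.
Proof. exact: (@slinN _ _ (fun a => form a e) (fun c a b => Hf1 c a b e)). Qed.
Lemma g0 y z : ga 0 y z = 0. Proof. exact: (@slin0 _ _ (fun x => ga x y z) (fun c a b => Hg1 c a b y z)). Qed.
Lemma gD1 x x' y z : ga (x + x') y z = ga x y z + ga x' y z.
Proof. exact: (@slinD _ _ (fun x => ga x y z) (fun c a b => Hg1 c a b y z)). Qed.
Lemma gZ1 c x y z : ga (c *: x) y z = c * ga x y z.
Proof. exact: (@slinZ _ _ (fun x => ga x y z) (fun c a b => Hg1 c a b y z)). Qed.
Lemma gD3 x x' y z : ga z y (x + x') = ga z y x + ga z y x'.
Proof. exact: (@slinD _ _ (fun x => ga z y x) (fun c a b => Hg3 c a b z y)). Qed.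
Lemma gZ3 c x y z : ga z y (c *: x) = c * ga z y x.
Proof. exact: (@slinZ _ _ (fun x => ga z y x) (fun c a b => Hg3 c a b z y)). Qed.
Lemma gxyx x y : ga x y x = 0.
Proof. have := Hg13 x y x; lra. Qed.

Section Steps.
Variables c1 c2 : L.
Hypothesis h1 : forall y, y \in Lbar -> br c1 y = 0.
Hypothesis h2 : forall y, y \in Lbar -> br c2 y = 0.

Lemma st1 c : (forall y, y \in Lbar -> br c y = 0) ->
  forall Y, Y \in lcs br 2 -> al Y c = 0.
Proof.
move=> hc; apply: (@span_ext _ (fun Y => al Y c)) => [a x y|x y hx hy] /=.
  exact: al1.
by rewrite Hcoc (brN x c) (hc x hx) (brN y c) (hc y hy) oppr0 !al0l subrr.
Qed.

Lemma st2 L0 : al (br c1 c2) L0 = 0.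
Proof. by rewrite Hcoc !st1 ?subrr ?brmem. Qed.

Lemma st2' L0 : al L0 (br c1 c2) = 0.
Proof. by rewrite alN st2 oppr0. Qed.

Lemma st3 c : (forall y, y \in Lbar -> br c y = 0) ->
  forall Y, Y \in lcs br 2 -> ga Y c (br c1 c2) = 0.
Proof.
move=> hc; apply: (@sspan_ext (fun Y => ga Y c (br c1 c2))) => [a x y|x y hx hy] /=.
  exact: Hg1.
have hW := brmem c1 c2.
have := Hdg x y c (br c1 c2); rewrite /d3s /half_wedge22.
rewrite (brN x c) (hc x hx) (brN y c) (hc y hy) oppr0 !(cenr _ _ hW).
rewrite !g0 !st2' !f0r !f0l => h.
lra.
Qed.

Lemma basis2 : exists b1 b2, [/\ b1 \in lcs br 2, b2 \in lcs br 2 &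
  forall Y, Y \in lcs br 2 -> exists a b, Y = a *: b1 + b *: b2].
Proof.
have hs : size (vbasis (lcs br 2)) = 2%N by rewrite size_tuple Hdim.
have hsp := span_basis (vbasisP (lcs br 2)).
have hm : forall v, v \in (vbasis (lcs br 2) : seq L) -> v \in lcs br 2.
  by move=> v; exact: vbasis_mem.
move: hsp hm hs; case: (vbasis (lcs br 2) : seq L) => [|b1 [|b2 [|? ?]]] // hsp hm _.
exists b1, b2; split.
- by apply: hm; rewrite inE eqxx.
- by apply: hm; rewrite !inE eqxx orbT.
move=> Y; rewrite -hsp span_cons span_seq1 => /memv_addP [u hu [v hv ->]].
case/vlineP: hu => a ->; case/vlineP: hv => b ->.
by exists a, b.
Qed.

Lemma st4 c : (forall y, y \in Lbar -> br c y = 0) -> br c1 c2 != 0 ->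
  forall U X, U \in lcs br 2 -> X \in lcs br 2 -> ga U c X = 0.
Proof.
move=> hc hW0 U X hU hX.
have [b1 [b2 [hb1 hb2 hB]]] := basis2.
have e1 := @st3 c hc b1 hb1; have e2 := @st3 c hc b2 hb2.
have [w1 [w2 hw]] := hB _ (brmem c1 c2).
rewrite hw !gD3 !gZ3 !gxyx (Hg13 b2 c b1) in e1 e2.
have hg : ga b1 c b2 = 0.
  have : (w1 != 0) || (w2 != 0).
    apply: contraR hW0; rewrite negb_or !negbK => /andP [/eqP ew1 /eqP ew2].
    by rewrite hw ew1 ew2 !scale0r addr0.
  case/orP => hw0.
    by move: e2; rewrite mulr0 addr0 mulrN => /eqP; rewrite oppr_eq0 mulf_eq0 (negbTE hw0) => /eqP.
  by move: e1; rewrite mulr0 add0r => /eqP; rewrite mulf_eq0 (negbTE hw0) => /eqP.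
have [u1 [u2 ->]] := hB _ hU; have [x1 [x2 ->]] := hB _ hX.
rewrite !gD1 !gZ1 !gD3 !gZ3 !gxyx (Hg13 b2 c b1) hg.
by rewrite !(mulr0, oppr0, addr0).
Qed.

End Steps.

Lemma main_res c1 c2 :
  (forall y, y \in Lbar -> br c1 y = 0) -> (forall y, y \in Lbar -> br c2 y = 0) ->
  condA br form act al ga 1 -> br c1 c2 = 0.
Proof.
move=> h1 h2 HA; case: (eqVneq (br c1 c2) 0) => // hW0.
apply: (HA (br c1 c2)).
  by split; [exact: Hcent (brmem c1 c2) | exact: brmem].
exists (- al c1 c2), (fun _ => 0); split.
  by move=> ? ? ? _ _; rewrite mulr0 addr0.
move=> Lv; split; first exact: st2'.
move=> X hX.
have := Hdg c1 c2 Lv X; rewrite /d3s /half_wedge22.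
rewrite !(cenr _ _ hX) !g0.
rewrite (@st4 c1 c2 h1 h2 c2 h2 hW0 _ _ (brmem c1 Lv) hX).
rewrite (@st4 c1 c2 h1 h2 c1 h1 hW0 _ _ (brmem c2 Lv) hX).
rewrite (alN c2 X) (@st1 c2 h2 X hX) (alN c1 X) (@st1 c1 h1 X hX) !oppr0 f0r f0l => h.
rewrite fNl (Hg12 Lv); lra.
Qed.
End Main.

Section C3.
Variables (R : realType) (n : nat) (g : 'rV[R]_n -> 'rV[R]_n -> 'rV[R]_n -> R).
Hypothesis Hg : is_C3s g.
Lemma c3_12 x y z : g x y z = - g y x z.
Proof.
case: Hg => H1 H2 H3 H4.
have D1 a b c d : g (a + b) c d = g a c d + g b c d.
  exact: (@slinD _ _ (fun a => g a c d) (fun k a b => H1 k a b c d)).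
have D2 a b c d : g c (a + b) d = g c a d + g c b d.
  exact: (@slinD _ _ (fun a => g c a d) (fun k a b => H2 k a b c d)).
have [e _ _] := H4 (x + y) z; have [ex _ _] := H4 x z; have [ey _ _] := H4 y z.
move: e; rewrite D1 !D2 ex ey add0r addr0.
move=> /eqP; rewrite addr_eq0 => /eqP //.
Qed.
Lemma c3_13 x y z : g x y z = - g z y x.
Proof.
case: Hg => H1 H2 H3 H4.
have D1 a b c d : g (a + b) c d = g a c d + g b c d.
  exact: (@slinD _ _ (fun a => g a c d) (fun k a b => H1 k a b c d)).
have D3 a b c d : g c d (a + b) = g c d a + g c d b.
  exact: (@slinD _ _ (fun a => g c d a) (fun k a b => H3 k a b c d)).
have [_ e _] := H4 (x + z) y; have [_ ex _] := H4 x y; have [_ ez _] := H4 z y.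
move: e; rewrite D1 !D3 ex ez add0r addr0.
move=> /eqP; rewrite addr_eq0 => /eqP //.
Qed.
End C3.

Section Transfer.
Variables (R : realType) (n m : nat).
Local Notation L := 'rV[R]_n.
Local Notation A := 'rV[R]_m.
Variables (br : L -> L -> L) (form : A -> A -> R) (act : L -> A -> A).
Variables (al al' : L -> L -> A) (ga ga' : L -> L -> L -> R).
Variables (tau : L -> A) (sig : L -> L -> R).
Hypothesis Hbr : is_lie_bracket br.
Hypothesis Hmod : is_orth_module br form act.
Hypothesis Hq : quad_cocycle br form act al ga.
Hypothesis Ht : is_C1 tau.
Hypothesis Hs : is_C2s sig.
Hypothesis Ha' : forall x y, al' x y = al x y + d1 br act tau x y.
Hypothesis Hg' : forall x y z, ga' x y z = ga x y z + d2s br sig x y z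
        + wedge21 form (fun u v => al u v + 2^-1 *: d1 br act tau u v) tau x y z.
Hypothesis Hinv : forall x y z, act z (al' x y) = 0.

Lemma tb1 c x y z : br (c *: x + y) z = c *: br x z + br y z. Proof. by case: Hbr. Qed.
Lemma tb2 c x y z : br z (c *: x + y) = c *: br z x + br z y. Proof. by case: Hbr. Qed.
Lemma tb3 x : br x x = 0. Proof. by case: Hbr. Qed.
Lemma tjac x y z : br x (br y z) + br y (br z x) + br z (br x y) = 0. Proof. by case: Hbr. Qed.
Lemma tbDl x y z : br (x + y) z = br x z + br y z.
Proof. exact: (@linD _ _ _ (fun x => br x z) (fun c x y => tb1 c x y z)). Qed.
Lemma tbDr x y z : br z (x + y) = br z x + br z y.
Proof. exact: (@linD _ _ _ (fun x => br z x) (fun c x y => tb2 c x y z)). Qed.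
Lemma tbZl c x z : br (c *: x) z = c *: br x z.
Proof. exact: (@linZ _ _ _ (fun x => br x z) (fun c x y => tb1 c x y z)). Qed.
Lemma tbZr c x z : br z (c *: x) = c *: br z x.
Proof. exact: (@linZ _ _ _ (fun x => br z x) (fun c x y => tb2 c x y z)). Qed.
Lemma tbNl x z : br (- x) z = - br x z.
Proof. exact: (@linN _ _ _ (fun x => br x z) (fun c x y => tb1 c x y z)). Qed.
Lemma tbNr x z : br z (- x) = - br z x.
Proof. exact: (@linN _ _ _ (fun x => br z x) (fun c x y => tb2 c x y z)). Qed.
Lemma tb0l z : br 0 z = 0. Proof. exact: (@lin0 _ _ _ (fun x => br x z) (fun c x y => tb1 c x y z)). Qed.
Lemma tbN x y : br x y = - br y x.
Proof.
have := tb3 (x + y); rewrite tbDl !tbDr !tb3 add0r addr0 => /eqP.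
by rewrite addr_eq0 => /eqP.
Qed.
Lemma tjac2 x y z : br (br x y) z - br (br x z) y + br (br y z) x = 0.
Proof.
have J := tjac x y z.
rewrite (tbN (br x y) z) (tbN (br x z) y) (tbN x z) tbNr (tbN (br y z) x).
apply/rowP => i; move/rowP/(_ i): J; rewrite !mxE => J; lra.
Qed.

Lemma tD x y : tau (x + y) = tau x + tau y. Proof. exact: (@linD _ _ _ tau Ht). Qed.
Lemma tZ c x : tau (c *: x) = c *: tau x. Proof. exact: (@linZ _ _ _ tau Ht). Qed.
Lemma tN x : tau (- x) = - tau x. Proof. exact: (@linN _ _ _ tau Ht). Qed.
Lemma tB x y : tau (x - y) = tau x - tau y. Proof. exact: (@linB _ _ _ tau Ht). Qed.
Lemma t0 : tau 0 = 0. Proof. exact: (@lin0 _ _ _ tau Ht). Qed.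

Lemma ta1 c x y v : act (c *: x + y) v = c *: act x v + act y v. Proof. by case: Hmod => _ []. Qed.
Lemma ta2 c x v w : act x (c *: v + w) = c *: act x v + act x w. Proof. by case: Hmod => _ []. Qed.
Lemma trep x y v : act (br x y) v = act x (act y v) - act y (act x v). Proof. by case: Hmod => _ []. Qed.
Lemma tskew x v w : form (act x v) w + form v (act x w) = 0. Proof. by case: Hmod => _ []. Qed.
Lemma aDl x y v : act (x + y) v = act x v + act y v.
Proof. exact: (@linD _ _ _ (fun x => act x v) (fun c x y => ta1 c x y v)). Qed.
Lemma aZl c x v : act (c *: x) v = c *: act x v.
Proof. exact: (@linZ _ _ _ (fun x => act x v) (fun c x y => ta1 c x y v)). Qed.
Lemma aNl x v : act (- x) v = - act x v.
Proof. exact: (@linN _ _ _ (fun x => act x v) (fun c x y => ta1 c x y v)). Qed.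
Lemma a0l v : act 0 v = 0.
Proof. exact: (@lin0 _ _ _ (fun x => act x v) (fun c x y => ta1 c x y v)). Qed.
Lemma aDr x v w : act x (v + w) = act x v + act x w.
Proof. exact: (@linD _ _ _ (fun v => act x v) (fun c v w => ta2 c x v w)). Qed.
Lemma aZr c x v : act x (c *: v) = c *: act x v.
Proof. exact: (@linZ _ _ _ (fun v => act x v) (fun c v w => ta2 c x v w)). Qed.
Lemma aNr x v : act x (- v) = - act x v.
Proof. exact: (@linN _ _ _ (fun v => act x v) (fun c v w => ta2 c x v w)). Qed.
Lemma a0r x : act x 0 = 0.
Proof. exact: (@lin0 _ _ _ (fun v => act x v) (fun c v w => ta2 c x v w)). Qed.

Lemma tf1 c a b e : form (c *: a + b) e = c * form a e + form b e. Proof. by case: Hmod => [[]]. Qed.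
Lemma tfs a b : form a b = form b a. Proof. by case: Hmod => [[]]. Qed.
Lemma tfnd a : (forall b, form a b = 0) -> a = 0. Proof. case: Hmod => [[_ _ H] _]; exact: H. Qed.
Lemma tf2 c a b e : form e (c *: a + b) = c * form e a + form e b.
Proof. by rewrite !(tfs e) tf1. Qed.
Lemma fDl a b e : form (a + b) e = form a e + form b e.
Proof. exact: (@slinD _ _ (fun a => form a e) (fun c a b => tf1 c a b e)). Qed.
Lemma fZl c a e : form (c *: a) e = c * form a e.
Proof. exact: (@slinZ _ _ (fun a => form a e) (fun c a b => tf1 c a b e)). Qed.
Lemma fNl' a e : form (- a) e = - form a e.
Proof. exact: (@slinN _ _ (fun a => form a e) (fun c a b => tf1 c a b e)). Qed.
Lemma f0l' e : form 0 e = 0.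
Proof. exact: (@slin0 _ _ (fun a => form a e) (fun c a b => tf1 c a b e)). Qed.
Lemma fDr a b e : form e (a + b) = form e a + form e b.
Proof. exact: (@slinD _ _ (fun a => form e a) (fun c a b => tf2 c a b e)). Qed.
Lemma fZr c a e : form e (c *: a) = c * form e a.
Proof. exact: (@slinZ _ _ (fun a => form e a) (fun c a b => tf2 c a b e)). Qed.
Lemma fNr a e : form e (- a) = - form e a.
Proof. exact: (@slinN _ _ (fun a => form e a) (fun c a b => tf2 c a b e)). Qed.
Lemma f0r' e : form e 0 = 0.
Proof. exact: (@slin0 _ _ (fun a => form e a) (fun c a b => tf2 c a b e)). Qed.
Lemma fact x v w : form (act x v) w = - form v (act x w).
Proof. have := tskew x v w; lra. Qed.

Lemma tal1 c x y z : al (c *: x + y) z = c *: al x z + al y z. Proof. by case: Hq => [[]]. Qed.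
Lemma tal2 c x y z : al z (c *: x + y) = c *: al z x + al z y. Proof. by case: Hq => [[]]. Qed.
Lemma tal3 x : al x x = 0. Proof. by case: Hq => [[]]. Qed.
Lemma td2a x y z : d2 br act al x y z = 0. Proof. by case: Hq. Qed.
Lemma td3g a b c d : d3s br ga a b c d = half_wedge22 form al a b c d. Proof. by case: Hq. Qed.
Lemma tgC3 : is_C3s ga. Proof. by case: Hq. Qed.
Lemma alDl' x y z : al (x + y) z = al x z + al y z.
Proof. exact: (@linD _ _ _ (fun x => al x z) (fun c x y => tal1 c x y z)). Qed.
Lemma alZl x c z : al (c *: x) z = c *: al x z.
Proof. exact: (@linZ _ _ _ (fun x => al x z) (fun c x y => tal1 c x y z)). Qed.
Lemma alDr' x y z : al z (x + y) = al z x + al z y.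
Proof. exact: (@linD _ _ _ (fun x => al z x) (fun c x y => tal2 c x y z)). Qed.
Lemma alZr x c z : al z (c *: x) = c *: al z x.
Proof. exact: (@linZ _ _ _ (fun x => al z x) (fun c x y => tal2 c x y z)). Qed.
Lemma alN' x y : al x y = - al y x.
Proof.
have := tal3 (x + y); rewrite alDl' !alDr' !tal3 add0r addr0 => /eqP.
by rewrite addr_eq0 => /eqP.
Qed.

Lemma ts1 c x y z : sig (c *: x + y) z = c * sig x z + sig y z. Proof. by case: Hs. Qed.
Lemma ts2 c x y z : sig z (c *: x + y) = c * sig z x + sig z y. Proof. by case: Hs. Qed.
Lemma ts3 x : sig x x = 0. Proof. by case: Hs. Qed.
Lemma sDl x y z : sig (x + y) z = sig x z + sig y z.
Proof. exact: (@slinD _ _ (fun x => sig x z) (fun c x y => ts1 c x y z)). Qed.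
Lemma sZl c x z : sig (c *: x) z = c * sig x z.
Proof. exact: (@slinZ _ _ (fun x => sig x z) (fun c x y => ts1 c x y z)). Qed.
Lemma sNl x z : sig (- x) z = - sig x z.
Proof. exact: (@slinN _ _ (fun x => sig x z) (fun c x y => ts1 c x y z)). Qed.
Lemma s0l z : sig 0 z = 0.
Proof. exact: (@slin0 _ _ (fun x => sig x z) (fun c x y => ts1 c x y z)). Qed.
Lemma sDr x y z : sig z (x + y) = sig z x + sig z y.
Proof. exact: (@slinD _ _ (fun x => sig z x) (fun c x y => ts2 c x y z)). Qed.
Lemma sZr c x z : sig z (c *: x) = c * sig z x.
Proof. exact: (@slinZ _ _ (fun x => sig z x) (fun c x y => ts2 c x y z)). Qed.
Lemma sN x y : sig x y = - sig y x.
Proof. have := ts3 (x + y); rewrite sDl !sDr !ts3; lra. Qed.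


Ltac expA := rewrite ?(tbDl, tbDr, tbZl, tbZr, tbNl, tbNr, tb0l, tD, tZ, tN, t0,
                       aDl, aZl, aNl, aDr, aZr, aNr, a0r, a0l).
Ltac rowring := apply/rowP => i; rewrite !mxE; ring.

Lemma d1_1 c x y z : d1 br act tau (c *: x + y) z = c *: d1 br act tau x z + d1 br act tau y z.
Proof. rewrite /d1; expA; rowring. Qed.
Lemma d1_2 c x y z : d1 br act tau z (c *: x + y) = c *: d1 br act tau z x + d1 br act tau z y.
Proof. rewrite /d1; expA; rowring. Qed.
Lemma d1xx x : d1 br act tau x x = 0.
Proof. by rewrite /d1 tb3 t0 subrr subr0. Qed.
Lemma d1N x y : d1 br act tau x y = - d1 br act tau y x.
Proof. rewrite /d1 (tbN y x) tN; rowring. Qed.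
Lemma d1Dl x y z : d1 br act tau (x + y) z = d1 br act tau x z + d1 br act tau y z.
Proof. exact: (@linD _ _ _ (fun x => d1 br act tau x z) (fun c x y => d1_1 c x y z)). Qed.
Lemma d1Zl c x z : d1 br act tau (c *: x) z = c *: d1 br act tau x z.
Proof. exact: (@linZ _ _ _ (fun x => d1 br act tau x z) (fun c x y => d1_1 c x y z)). Qed.
Lemma d1Dr x y z : d1 br act tau z (x + y) = d1 br act tau z x + d1 br act tau z y.
Proof. exact: (@linD _ _ _ (fun x => d1 br act tau z x) (fun c x y => d1_2 c x y z)). Qed.
Lemma d1Zr c x z : d1 br act tau z (c *: x) = c *: d1 br act tau z x.
Proof. exact: (@linZ _ _ _ (fun x => d1 br act tau z x) (fun c x y => d1_2 c x y z)). Qed.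

Lemma al'C2 : is_C2 al'.
Proof.
split.
- by move=> c x y z; rewrite !Ha' tal1 d1_1; rowring.
- by move=> c x y z; rewrite !Ha' tal2 d1_2; rowring.
- by move=> x; rewrite Ha' tal3 d1xx addr0.
Qed.

Lemma d2d1 x y z : d2 br act (d1 br act tau) x y z = 0.
Proof.
have := congr1 tau (tjac2 x y z); rewrite t0 !(tD, tN) => hJ.
rewrite /d2 /d1 !trep; expA.
apply/rowP => i; move/rowP/(_ i): hJ; rewrite !mxE => hJ; lra.
Qed.

Lemma coc' x y z : al' (br x y) z = al' (br x z) y - al' (br y z) x.
Proof.
have h : d2 br act al' x y z = 0.
  have -> : d2 br act al' x y z = d2 br act al x y z + d2 br act (d1 br act tau) x y z.
    by rewrite /d2 !Ha' !aDr; rowring.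
  by rewrite td2a d2d1 addr0.
move: h; rewrite /d2 !Hinv => h.
apply/rowP => i; move/rowP/(_ i): h; rewrite !mxE => h; lra.
Qed.


Let beta := fun u v => al u v + 2^-1 *: d1 br act tau u v.
Ltac expS := rewrite ?(tbDl, tbDr, tbZl, tbZr, tbNl, tbNr, tb0l, sDl, sZl, sNl, s0l, sDr, sZr).

Lemma ds_C3 : is_C3s (d2s br sig).
Proof.
split.
- by move=> c x y z w; rewrite /d2s; expS; ring.
- by move=> c x y z w; rewrite /d2s; expS; ring.
- by move=> c x y z w; rewrite /d2s; expS; ring.
- move=> x y; split; rewrite /d2s ?tb3 ?s0l.
  + ring.
  + rewrite (tbN y x) sNl; ring.
  + ring.
Qed.

Ltac expW := rewrite ?(alDl', alZl, alDr', alZr, d1Dl, d1Zl, d1Dr, d1Zr, tD, tZ,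
                       fDl, fZl, fDr, fZr, fNl', fNr, scalerDr,
                       tbDl, tbDr, tbZl, tbZr, tbNl, tbNr, tb0l, tN, t0,
                       aDl, aZl, aNl, aDr, aZr, aNr, a0r, a0l).

Lemma w_C3 : is_C3s (wedge21 form beta tau).
Proof.
split.
- by move=> c x y z w; rewrite /wedge21 /beta /=; expW; ring.
- by move=> c x y z w; rewrite /wedge21 /beta /=; expW; ring.
- by move=> c x y z w; rewrite /wedge21 /beta /=; expW; ring.
- move=> x y; rewrite /wedge21 /beta /= tal3 d1xx scaler0 addr0 f0l'.
  rewrite (alN' y x) (d1N y x) scalerN -opprD fNl'.
  split; ring.
Qed.

Lemma ga'C3 : is_C3s ga'.
Proof.
have [g1 g2 g3 g4] := tgC3; have [s1 s2 s3 s4] := ds_C3; have [w1 w2 w3 w4] := w_C3.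
split.
- by move=> c x y z w; rewrite !Hg' g1 s1 -/beta w1; ring.
- by move=> c x y z w; rewrite !Hg' g2 s2 -/beta w2; ring.
- by move=> c x y z w; rewrite !Hg' g3 s3 -/beta w3; ring.
- move=> x y; rewrite !Hg' -/beta.
  have [a1 a2 a3] := g4 x y; have [b1 b2 b3] := s4 x y; have [e1 e2 e3] := w4 x y.
  by rewrite a1 a2 a3 b1 b2 b3 e1 e2 e3 !addr0.
Qed.


Lemma LI (eta : L -> L -> A) a b c d :
  d2 br act eta a b c = 0 -> d2 br act eta a b d = 0 ->
  d2 br act eta a c d = 0 -> d2 br act eta b c d = 0 ->
  d3s br (wedge21 form eta tau) a b c d =
    form (eta a b) (d1 br act tau c d) + form (eta c d) (d1 br act tau a b)
  - form (eta a c) (d1 br act tau b d) - form (eta b d) (d1 br act tau a c)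
  + form (eta a d) (d1 br act tau b c) + form (eta b c) (d1 br act tau a d).
Proof.
move=> H1 H2 H3 H4.
move: (congr1 (fun v => form v (tau d)) H1) (congr1 (fun v => form v (tau c)) H2)
      (congr1 (fun v => form v (tau b)) H3) (congr1 (fun v => form v (tau a)) H4).
rewrite /= /d2 !f0l' !(fDl, fNl', fact) => e1 e2 e3 e4.
rewrite /d3s /wedge21 /d1 !(fDr, fNr).
lra.
Qed.

Lemma Lsig a b c d : d3s br (d2s br sig) a b c d = 0.
Proof.
move: (congr1 (fun v => sig v d) (tjac2 a b c)) (congr1 (fun v => sig v c) (tjac2 a b d))
      (congr1 (fun v => sig v b) (tjac2 a c d)) (congr1 (fun v => sig v a) (tjac2 b c d)).
rewrite /= !s0l !(sDl, sNl) => j1 j2 j3 j4.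
have k1 := sN (br c d) (br a b); have k2 := sN (br b d) (br a c).
have k3 := sN (br b c) (br a d).
rewrite /d3s /d2s; lra.
Qed.

Lemma dg' a b c d : d3s br ga' a b c d = half_wedge22 form al' a b c d.
Proof.
have Hdec : d3s br ga' a b c d = d3s br ga a b c d + d3s br (d2s br sig) a b c d
   + (d3s br (wedge21 form al tau) a b c d
      + 2^-1 * d3s br (wedge21 form (d1 br act tau) tau) a b c d).
  rewrite /d3s !Hg' /wedge21 !(fDl, fZl); ring.
have HIa := @LI al a b c d (td2a a b c) (td2a a b d) (td2a a c d) (td2a b c d).
have HId := @LI (d1 br act tau) a b c d (d2d1 a b c) (d2d1 a b d) (d2d1 a c d) (d2d1 b c d).
rewrite Hdec Lsig td3g HIa HId /half_wedge22 !Ha'.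
move: (d1 br act tau) => dt.
rewrite !(fDl, fDr).
have s1 := tfs (dt a b) (al c d); have s2 := tfs (dt a c) (al b d).
have s3 := tfs (dt a d) (al b c); have s4 := tfs (dt c d) (dt a b).
have s5 := tfs (dt b d) (dt a c); have s6 := tfs (dt b c) (dt a d).
lra.
Qed.

End Transfer.

Theorem lemma4 (R : realType) (n : nat)
    (br : 'rV[R]_n -> 'rV[R]_n -> 'rV[R]_n) (Lbar : {vspace 'rV[R]_n}) :
  is_lie_bracket br -> nilpotent br ->
  \dim (lcs br 2) = 2%N ->
  (forall u, u \in lcs br 2 -> central br u) ->
  admissible_lie br ->
  \dim Lbar = 3%N -> brspan br Lbar Lbar = lcs br 2 ->
  forall L1 L2 : 'rV[R]_n,
    (forall y, y \in Lbar -> br L1 y = 0) ->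
    (forall y, y \in Lbar -> br L2 y = 0) ->
    br L1 L2 = 0.
Proof.
move=> Hbr _ Hdim Hcent [m [form [act [Hmod _ [al [ga [Hq [al' [ga' [Hsc Hinv Hk]]]]]]]]]].
move=> _ HLbar L1 L2 h1 h2.
case: Hsc => [tau [sig [Ht Hs Ha' Hg']]].
have Hf1 : forall c a b e, form (c *: a + b) e = c * form a e + form b e.
  by case: Hmod => [[]].
have Hfs : forall a b, form a b = form b a by case: Hmod => [[]].
have HC3 := @ga'C3 _ _ _ br form act al ga ga' tau sig Hbr Hmod Hq Ht Hs Hg'.
have [g1 _ g3 _] := HC3.
apply: (@main_res _ _ _ br form act al' ga' Lbar Hbr Hcent HLbar Hdim Hf1 Hfs
  (@al'C2 _ _ _ br form act al al' ga tau Hbr Hmod Hq Ht Ha')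
  (@coc' _ _ _ br form act al al' ga tau Hbr Hmod Hq Ht Ha' Hinv)
  g1 g3 (@c3_12 _ _ ga' HC3) (@c3_13 _ _ ga' HC3)
  (@dg' _ _ _ br form act al al' ga ga' tau sig Hbr Hmod Hq Ht Hs Ha' Hg')
  L1 L2 h1 h2 (Hk 1%N).1).
Qed.
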